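(* Let $R$ be a commutative unital ring which is Noetherian and quasi-Euclidean, and let $M$ be a finitely generated $R$-module whose minimal number of generators is $\mathrm{rk}_R(M)$. Then for every integer $n > \mathrm{rk}_R(M)$, the action of $\mathrm{E}_n(R)$ on $\mathrm{Um}_n(M)$ by matrix right-multiplication is transitive.
   Context: A ring $R$ is quasi-Euclidean if for every $n \ge 2$ and every $\mathbf{r} = (r_1,\dots,r_n) \in R^n$ there exist $E \in \mathrm{E}_n(R)$ and $d \in R$ with $(d,0,\dots,0) = \mathbf{r}E$. $\mathrm{E}_n(R)$ is the subgroup of $\mathrm{GL}_n(R)$ generated by the elementary matrices (matrices differing from the identity in a single off-diagonal entry). $\mathrm{Um}_n(M)$ is the set of $\mathbf{m}=(m_1,\dots,m_n)\in M^n$ whose components generate $M$, and a matrix $A$ acts by $(\mathbf{m}A)_j = \sum_i m_i A_{ij}$. *)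

(* Defs.v *)
From HB Require Import structures.
From mathcomp Require Import all_boot all_order all_algebra.
Set Implicit Arguments. Unset Strict Implicit. Unset Printing Implicit Defensive.
Import Order.TTheory GRing.Theory Num.Theory.
Local Open Scope ring_scope.

Definition is_ideal (R : comPzRingType) (I : R -> Prop) : Prop :=
  I 0 /\ (forall x y, I x -> I y -> I (x + y)) /\ (forall a x, I x -> I (a * x)).

Definition noetherian (R : comPzRingType) : Prop :=
  forall I : nat -> R -> Prop,
    (forall k, is_ideal (I k)) ->
    (forall k x, I k x -> I k.+1 x) ->
    exists N, forall k, (N <= k)%N -> forall x, I k x <-> I N x.

Definition elementary (R : comPzRingType) (n : nat) (A : 'M[R]_n) : Prop :=
  exists (i j : 'I_n) (c : R), i != j /\ A = 1%:M + c *: delta_mx i j.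

(* E_n(R): the subgroup of GL_n(R) generated by elementary matrices.
   Since the inverse of an elementary matrix is elementary, this is the
   set of finite products of elementary matrices (including the empty one). *)
Inductive En (R : comPzRingType) (n : nat) : 'M[R]_n -> Prop :=
| En_id : En 1%:M
| En_mul : forall A e, En A -> elementary e -> En (A *m e).

Definition quasi_euclidean (R : comPzRingType) : Prop :=
  forall (n : nat), (2 <= n)%N -> forall r : 'rV[R]_n,
    exists E : 'M[R]_n, exists d : R,
      En E /\ r *m E = \row_(j < n) (if val j == 0%N then d else 0).

Definition mact (R : comPzRingType) (M : lmodType R) (n : nat)
  (m : 'I_n -> M) (A : 'M[R]_n) : 'I_n -> M :=
  fun j => \sum_(i < n) A i j *: m i.

Definition generates (R : comPzRingType) (M : lmodType R) (n : nat)
  (m : 'I_n -> M) : Prop :=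
  forall x : M, exists c : 'I_n -> R, x = \sum_(i < n) c i *: m i.

Definition Um (R : comPzRingType) (M : lmodType R) (n : nat) (m : 'I_n -> M) : Prop :=
  generates m.

Definition is_rk (R : comPzRingType) (M : lmodType R) (k : nat) : Prop :=
  (exists g : 'I_k -> M, generates g) /\
  (forall k' (g : 'I_k' -> M), generates g -> (k <= k')%N).

(* Main.v *)
Require Import Defs.
From mathcomp Require Import all_boot all_order all_algebra zify.
From Stdlib Require Import FunctionalExtensionality.
Set Implicit Arguments. Unset Strict Implicit. Unset Printing Implicit Defensive.
Import Order.TTheory GRing.Theory Num.Theory.
Local Open Scope ring_scope.


Definition tv {R : comPzRingType} {M : lmodType R} {n : nat}
  (v : 'I_n -> M) (i j : 'I_n) (c : R) : 'I_n -> M :=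
  fun y => if y == j then v j + c *: v i else v y.

Inductive Reach {R : comPzRingType} {M : lmodType R} {n : nat} :
  ('I_n -> M) -> ('I_n -> M) -> Prop :=
| Reach_refl v : Reach v v
| Reach_step v i j c w : i != j -> Reach (tv v i j c) w -> Reach v w.

Lemma Reach_trans {R : comPzRingType} {M : lmodType R} {n : nat}
  (u v w : 'I_n -> M) : Reach u v -> Reach v w -> Reach u w.
Proof.
elim=> [//|u' i j c w' hij _ IH] hw; exact: (Reach_step hij (IH hw)).
Qed.

Lemma Reach1 {R : comPzRingType} {M : lmodType R} {n : nat}
  (v : 'I_n -> M) i j c : i != j -> Reach v (tv v i j c).
Proof. move=> hij; exact: (Reach_step hij (Reach_refl _)). Qed.

Lemma tv_inv {R : comPzRingType} {M : lmodType R} {n : nat}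
  (v : 'I_n -> M) i j c : i != j -> tv (tv v i j c) i j (- c) = v.
Proof.
move=> hij; apply: functional_extensionality => y; rewrite /tv.
rewrite eqxx (negbTE hij).
case: eqP => [->|//]; by rewrite scaleNr addrK.
Qed.

Lemma Reach_sym {R : comPzRingType} {M : lmodType R} {n : nat}
  (v w : 'I_n -> M) : Reach v w -> Reach w v.
Proof.
elim=> [//|u' i j c w' hij _ IH]; first exact: Reach_refl.
apply: (Reach_trans IH).
rewrite -{2}(tv_inv u' c hij); exact: Reach1.
Qed.

Lemma mact_mul {R : comPzRingType} {M : lmodType R} {n : nat}
  (v : 'I_n -> M) (A B : 'M[R]_n) : mact v (A *m B) = mact (mact v A) B.
Proof.
apply: functional_extensionality => j; rewrite /mact.
under eq_bigr do rewrite mxE scaler_suml.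
rewrite exchange_big /=; apply: eq_bigr => l _.
rewrite scaler_sumr; apply: eq_bigr => i _.
by rewrite scalerA mulrC.
Qed.

Lemma mact1 {R : comPzRingType} {M : lmodType R} {n : nat}
  (v : 'I_n -> M) : mact v 1%:M = v.
Proof.
apply: functional_extensionality => j; rewrite /mact.
rewrite (bigD1 j) //= big1 ?addr0; first by rewrite mxE eqxx scale1r.
by move=> i hij; rewrite mxE (negbTE hij) mulr0n scale0r.
Qed.

Lemma mact_elem {R : comPzRingType} {M : lmodType R} {n : nat}
  (v : 'I_n -> M) i j c : i != j ->
  mact v (1%:M + c *: delta_mx i j) = tv v i j c.
Proof.
move=> hij; apply: functional_extensionality => m.
have -> : mact v (1%:M + c *: delta_mx i j) m =
   mact v 1%:M m + \sum_l (c *: delta_mx i j) l m *: v l.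
  by rewrite /mact -big_split /=; apply: eq_bigr => l _; rewrite mxE scalerDl.
rewrite mact1 /tv; case: eqP => [->|hm].
  congr (_ + _); rewrite (bigD1 i) //= big1 ?addr0.
    by rewrite !mxE !eqxx mulr1.
  by move=> l hl; rewrite !mxE (negbTE hl) mulr0 scale0r.
rewrite big1 ?addr0 // => l _; rewrite !mxE.
by move/eqP/negbTE: hm => ->; rewrite andbF mulr0 scale0r.
Qed.

Lemma En_mulmx {R : comPzRingType} {n : nat} (A B : 'M[R]_n) :
  En A -> En B -> En (A *m B).
Proof.
move=> hA; elim=> [|B' e _ IH he]; first by rewrite mulmx1.
rewrite mulmxA; exact: En_mul IH he.
Qed.

Lemma Reach_mact {R : comPzRingType} {M : lmodType R} {n : nat}
  (v w : 'I_n -> M) : Reach v w -> exists E, En E /\ mact v E = w.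
Proof.
elim=> [u|u i j c w' hij _ [E [hE <-]]].
  by exists 1%:M; split; [exact: En_id | exact: mact1].
exists ((1%:M + c *: delta_mx i j) *m E); split.
  apply: En_mulmx => //; rewrite -[_ + _]mul1mx; apply: En_mul; first exact: En_id.
  by exists i, j, c.
by rewrite mact_mul mact_elem.
Qed.


Definition pact {R : comPzRingType} {M : lmodType R} {n q : nat}
  (f : 'I_q -> 'I_n) (v : 'I_n -> M) (E : 'M[R]_q) : 'I_n -> M :=
  fun y => match [pick j | f j == y] with
           | Some j => \sum_i E i j *: v (f i)
           | None => v y end.

Lemma pactE_in {R : comPzRingType} {M : lmodType R} {n q : nat}
  (f : 'I_q -> 'I_n) (v : 'I_n -> M) (E : 'M[R]_q) j : injective f ->
  pact f v E (f j) = mact (fun i => v (f i)) E j.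
Proof.
move=> finj; rewrite /pact; case: pickP => [j' /eqP /finj -> //|H].
by have := H j; rewrite eqxx.
Qed.

Lemma pactE_out {R : comPzRingType} {M : lmodType R} {n q : nat}
  (f : 'I_q -> 'I_n) (v : 'I_n -> M) (E : 'M[R]_q) y : (forall j, f j != y) ->
  pact f v E y = v y.
Proof.
move=> H; rewrite /pact; case: pickP => [j' hj|//].
by have := H j'; rewrite hj.
Qed.

Lemma pact_Reach {R : comPzRingType} {M : lmodType R} {n q : nat}
  (f : 'I_q -> 'I_n) (v : 'I_n -> M) (E : 'M[R]_q) : injective f ->
  En E -> Reach v (pact f v E).
Proof.
move=> finj; elim=> [|A e _ IH [i [j [c [hij ->]]]]].
  have -> : pact f v 1%:M = v; last exact: Reach_refl.
  apply: functional_extensionality => y.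
  case: (pickP (fun j => f j == y)) => [j /eqP <- | H].
    by rewrite pactE_in // mact1.
  by rewrite pactE_out // => j; rewrite H.
apply: (Reach_trans IH).
have -> : pact f v (A *m (1%:M + c *: delta_mx i j)) =
          tv (pact f v A) (f i) (f j) c.
  apply: functional_extensionality => y.
  case: (pickP (fun j => f j == y)) => [m /eqP <- | H].
    rewrite pactE_in // mact_mul mact_elem // /tv (inj_eq finj).
    by rewrite !pactE_in.
  rewrite pactE_out; last by move=> j'; rewrite H.
  rewrite /tv; case: eqP => [hy|]; last by rewrite pactE_out // => j'; rewrite H.
  by have := H j; rewrite hy eqxx.
apply: Reach1; by rewrite (inj_eq finj).
Qed.

Lemma gen_mact {R : comPzRingType} {M : lmodType R} {n : nat}
  (w : 'I_n -> M) E : generates (mact w E) -> generates w.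
Proof.
move=> hg x; have [c ->] := hg x.
exists (fun i => \sum_l c l * E i l).
rewrite /mact; under eq_bigr do rewrite scaler_sumr.
rewrite exchange_big /=; apply: eq_bigr => i _.
rewrite scaler_suml; apply: eq_bigr => l _; by rewrite scalerA.
Qed.

Lemma gen_Reach {R : comPzRingType} {M : lmodType R} {n : nat}
  (v w : 'I_n -> M) : generates v -> Reach v w -> generates w.
Proof.
move=> hv /Reach_sym /Reach_mact [E [_ hE]]; apply: (gen_mact (E := E)).
by rewrite hE.
Qed.

Definition inspan {R : comPzRingType} {M : lmodType R} {r : nat}
  (x : 'I_r -> M) (S : {set 'I_r}) (y : M) : Prop :=
  exists c : 'I_r -> R, y = \sum_(l in S) c l *: x l.

Lemma inspan0 {R : comPzRingType} {M : lmodType R} {r : nat}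
  (x : 'I_r -> M) S : inspan x S 0.
Proof. by exists (fun _ => 0); rewrite big1 // => l _; rewrite scale0r. Qed.

Lemma inspanD {R : comPzRingType} {M : lmodType R} {r : nat}
  (x : 'I_r -> M) S a b : inspan x S a -> inspan x S b -> inspan x S (a + b).
Proof.
move=> [c ->] [d ->]; exists (fun l => c l + d l).
by rewrite -big_split /=; apply: eq_bigr => l _; rewrite scalerDl.
Qed.

Lemma inspanZ {R : comPzRingType} {M : lmodType R} {r : nat}
  (x : 'I_r -> M) S k a : inspan x S a -> inspan x S (k *: a).
Proof.
move=> [c ->]; exists (fun l => k * c l).
by rewrite scaler_sumr; apply: eq_bigr => l _; rewrite scalerA.
Qed.

Lemma inspan_sum {R : comPzRingType} {M : lmodType R} {r q : nat}
  (x : 'I_r -> M) S (F : 'I_q -> M) :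
  (forall i, inspan x S (F i)) -> inspan x S (\sum_i F i).
Proof.
move=> H; apply: (big_ind (inspan x S)) => //; [exact: inspan0 | exact: inspanD].
Qed.

Lemma inspan_sub {R : comPzRingType} {M : lmodType R} {r : nat}
  (x : 'I_r -> M) (S S' : {set 'I_r}) a : S \subset S' ->
  inspan x S a -> inspan x S' a.
Proof.
move=> hS [c ->]; exists (fun l => if l \in S then c l else 0).
rewrite [in RHS](big_setID S) /= (setIidPr hS).
rewrite [X in _ = _ + X]big1 ?addr0; last first.
  by move=> l; rewrite inE => /andP [/negbTE -> _]; rewrite scale0r.
by apply: eq_bigr => l ->.
Qed.


Lemma lemZ {R : comPzRingType} {M : lmodType R} {n r : nat}
  (hQE : quasi_euclidean R) (x : 'I_r -> M) :
  forall (m : nat) (S : {set 'I_r}) (T : {set 'I_n}) (v : 'I_n -> M),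
  #|S| = m -> (#|S| < #|T|)%N -> (forall j, j \in T -> inspan x S (v j)) ->
  exists w, Reach v w /\ (forall y, y \notin T -> w y = v y) /\
    (forall j, j \in T -> inspan x S (w j)) /\ exists2 z, z \in T & w z = 0.
Proof.
elim=> [|m IH] S T v hm hST hv.
  have S0 := cards0_eq hm.
  have : T != set0 by rewrite -card_gt0; apply: leq_ltn_trans hST.
  case/set0Pn => z hz.
  exists v; split; first exact: Reach_refl.
  split; first by []. split; first by [].
  exists z => //; have [c ->] := hv z hz; by rewrite S0 big_set0.
have : S != set0 by rewrite -card_gt0 hm.
case/set0Pn => l0 hl0.
set q := #|T|.
have hq : (2 <= q)%N by apply: leq_trans hST; rewrite hm.
set f := fun i : 'I_q => (enum_val i : 'I_n).
have finj : injective f := enum_val_inj.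
have fT : forall i, f i \in T by move=> i; exact: enum_valP.
have [C hC] : exists C : 'I_q -> 'I_r -> R,
    forall i, v (f i) = \sum_(l in S) C i l *: x l.
  by apply: (@fin_all_exists _ (fun _ => 'I_r -> R) (fun i (c : 'I_r -> R) => v (f i) = \sum_(l in S) c l *: x l)) => i; exact: hv _ (fT i).
set a : 'rV[R]_q := \row_i C i l0.
have [E [d [hE hd]]] := hQE q hq a.
set w1 := pact f v E.
have hw1 : Reach v w1 := pact_Reach v finj hE.
have q0 : (0 < q)%N by apply: leq_trans hq.
set i0 : 'I_q := Ordinal q0.
set t0 := f i0.
have ht0 : t0 \in T := fT i0.
set T' := T :\ t0. set S' := S :\ l0.
have hS' : #|S'| = m by move: hm; rewrite (cardsD1 l0) hl0 => -[].
have hT' : (#|S'| < #|T'|)%N.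
  by move: hST; rewrite (cardsD1 l0 S) (cardsD1 t0 T) hl0 ht0.
have w1f : forall i, w1 (f i) = \sum_(l in S) (\sum_i' E i' i * C i' l) *: x l.
  move=> i; rewrite /w1 pactE_in // /mact.
  under eq_bigr do rewrite hC scaler_sumr.
  rewrite exchange_big /=; apply: eq_bigr => l _; rewrite scaler_suml.
  by apply: eq_bigr => i' _; rewrite scalerA.
have hv1 : forall j, j \in T' -> inspan x S' (w1 j).
  move=> j; rewrite in_setD1 => /andP [hjt hjT].
  have -> : j = f (enum_rank_in ht0 j) by rewrite /f enum_rankK_in.
  set i := enum_rank_in ht0 j.
  have hi : val i != 0%N.
    apply: contra hjt => /eqP hii.
    rewrite /t0 (_ : i0 = i); last by apply: val_inj; rewrite /= hii.
    by rewrite /i /f enum_rankK_in.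
  exists (fun l => \sum_i' E i' i * C i' l); rewrite w1f (bigD1 l0) //=.
  have -> : \sum_i' E i' i * C i' l0 = 0.
    transitivity ((a *m E) 0 i); last by rewrite hd mxE (negbTE hi).
    by rewrite mxE; apply: eq_bigr => k _; rewrite mxE mulrC.
  rewrite scale0r add0r; apply: eq_bigl => l; by rewrite in_setD1 andbC.
have [w [hw [hout [hin [z hz hz0]]]]] := IH S' T' w1 hS' hT' hv1.
exists w; split; first exact: Reach_trans hw1 hw.
have hT'T : forall y, y \in T' -> y \in T by move=> y; rewrite in_setD1 => /andP[].
split.
  move=> y hy; have hy' : y \notin T' by apply: contra hy; exact: hT'T.
  rewrite hout // /w1 pactE_out // => i; apply: contraNneq hy => <-; exact: fT.
split; last by exists z => //; exact: hT'T.
move=> j hj; case: (eqVneq j t0) => [->|hjt].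
  rewrite hout; last by rewrite in_setD1 eqxx.
  by rewrite /t0 w1f; eexists.
apply: inspan_sub (hin j _); [exact: subD1set | by rewrite in_setD1 hjt].
Qed.


Definition upd {M : Type} {n : nat} (v : 'I_n -> M) (z : 'I_n) (x : M) : 'I_n -> M :=
  fun y => if y == z then x else v y.

Lemma insert_seq {R : comPzRingType} {M : lmodType R} {n : nat}
  (v : 'I_n -> M) z (c : 'I_n -> R) (s : seq 'I_n) : z \notin s ->
  Reach v (upd v z (v z + \sum_(i <- s) c i *: v i)).
Proof.
elim: s => [|i s IH].
  rewrite big_nil addr0 => _.
  have -> : upd v z (v z) = v.
    by apply: functional_extensionality => y; rewrite /upd; case: eqP => [->|].
  exact: Reach_refl.
rewrite in_cons negb_or => /andP [hzi hzs].
apply: (Reach_trans (IH hzs)).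
have hiz : i != z by rewrite eq_sym.
have -> : upd v z (v z + \sum_(j <- i :: s) c j *: v j) =
    tv (upd v z (v z + \sum_(j <- s) c j *: v j)) i z (c i).
  apply: functional_extensionality => y; rewrite /tv /upd big_cons.
  rewrite eqxx (negbTE hiz); case: eqP => // _.
  by rewrite [c i *: v i + _]addrC addrA.
exact: Reach1.
Qed.

Lemma clear_seq {R : comPzRingType} {M : lmodType R} {n : nat}
  (v : 'I_n -> M) z (d : 'I_n -> R) (s : seq 'I_n) : z \notin s -> uniq s ->
  Reach v (fun y => if y \in s then v y + d y *: v z else v y).
Proof.
elim: s => [|i s IH].
  move=> _ _; exact: Reach_refl.
rewrite in_cons negb_or => /andP [hzi hzs] /= /andP [his hu].
apply: (Reach_trans (IH hzs hu)).
have -> : (fun y => if y \in i :: s then v y + d y *: v z else v y) =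
    tv (fun y => if y \in s then v y + d y *: v z else v y) z i (d i).
  apply: functional_extensionality => y; rewrite /tv in_cons.
  rewrite (negbTE his) (negbTE hzs).
  by case: eqP => [->|].
exact: Reach1.
Qed.


Definition cform {R : comPzRingType} {M : lmodType R} {n r : nat}
  (g : 'I_r -> M) : 'I_n -> M := fun j => oapp g 0 (insub (val j)).

Definition Sk (r k : nat) : {set 'I_r} := [set l : 'I_r | (k <= l)%N].

Definition Inv {R : comPzRingType} {M : lmodType R} {n r : nat}
  (g : 'I_r -> M) (k : nat) (v : 'I_n -> M) : Prop :=
  generates v /\ (forall j : 'I_n, (j < k)%N -> v j = cform g j) /\
  (forall j : 'I_n, (k <= j)%N -> inspan g (Sk r k) (v j)).

Lemma inspan_tv {R : comPzRingType} {M : lmodType R} {n r : nat}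
  (x : 'I_r -> M) S (T : {set 'I_n}) (w : 'I_n -> M) i j c :
  i \in T -> (forall y, y \in T -> inspan x S (w y)) ->
  forall y, y \in T -> inspan x S (tv w i j c y).
Proof.
move=> hi h y hy; rewrite /tv; case: eqP => [hyj|_]; last exact: h.
rewrite -hyj; apply: inspanD; [exact: h | apply: inspanZ; exact: h].
Qed.

Lemma step {R : comPzRingType} {M : lmodType R} {n r : nat}
  (hQE : quasi_euclidean R) (g : 'I_r -> M) (hr : (r < n)%N)
  (k : nat) (hk : (k < r)%N) (v : 'I_n -> M) :
  Inv g k v -> exists w, Reach v w /\ Inv g k.+1 w.
Proof.
move=> [hgen [hpre hspan]].
have hkn : (k < n)%N by lia.
set lk : 'I_r := Ordinal hk. set kn : 'I_n := Ordinal hkn.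
set Tk := [set j : 'I_n | (k <= j)%N].
have hcard : (#|Sk r k| < #|Tk|)%N.
  have hrn : (r <= n)%N by lia.
  have winj : injective (@widen_ord r n hrn).
    by move=> a b /(congr1 val) /= /val_inj.
  rewrite -(card_imset (Sk r k) winj).
  apply: proper_card; apply/properP; split.
    apply/subsetP => y /imsetP [l]; rewrite !inE => hl ->; by [].
  have hn0 : (n.-1 < n)%N by lia.
  exists (Ordinal hn0); first by rewrite inE /=; lia.
  apply/imsetP => -[l _ /(congr1 val) /= h].
  have := ltn_ord l; lia.
have hsp : forall j, j \in Tk -> inspan g (Sk r k) (v j).
  by move=> j; rewrite inE => hj; exact: hspan.
have [w1 [hR1 [hout1 [hin1 [z hz hz0]]]]] := @lemZ R M n r hQE g _ _ _ v (erefl _) hcard hsp.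
have hknT : kn \in Tk by rewrite inE.
have [w2 [hR2 [h2k [hout2 hin2]]]] : exists w2, Reach w1 w2 /\ w2 kn = 0 /\
   (forall y, y \notin Tk -> w2 y = w1 y) /\
   (forall j, j \in Tk -> inspan g (Sk r k) (w2 j)).
  case: (eqVneq z kn) => [<-|hzk].
    by exists w1; split; first exact: Reach_refl.
  exists (tv (tv w1 kn z 1) z kn (-1)); split.
    apply: (Reach_trans (@Reach1 _ _ _ w1 kn z 1 _)); first by rewrite eq_sym.
    exact: Reach1.
  split.
    rewrite /tv eqxx eq_sym (negbTE hzk) eqxx hz0 add0r scale1r scaleN1r.
    exact: subrr.
  split.
    move=> y hy; rewrite /tv.
    have -> : (y == kn) = false by apply: contraNF hy => /eqP ->.
    by have -> : (y == z) = false by apply: contraNF hy => /eqP ->.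
  move=> j hj.
  apply: (inspan_tv kn (-1) hz _ hj) => y hy; exact: (inspan_tv z 1 hknT hin1).
have hgen2 : generates w2 := gen_Reach hgen (Reach_trans hR1 hR2).
have [c hc] := hgen2 (g lk).
set s := [seq i <- index_enum 'I_n | i != kn].
have hkns : kn \notin s by rewrite mem_filter eqxx.
have hR3 := @insert_seq _ _ _ w2 kn c s hkns.
set w3 := upd w2 kn (w2 kn + \sum_(i <- s) c i *: w2 i) in hR3.
have w3kn : w3 kn = g lk.
  rewrite /w3 /upd eqxx h2k add0r big_filter hc [in RHS](bigD1 kn) //= h2k.
  by rewrite scaler0 add0r.
have w3j : forall j, j != kn -> w3 j = w2 j.
  by move=> j hj; rewrite /w3 /upd (negbTE hj).
have [Dc hDc] : exists Dc : 'I_n -> 'I_r -> R, forall j, j \in Tk ->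
    w2 j = \sum_(l in Sk r k) Dc j l *: g l.
  apply: (@fin_all_exists _ (fun _ => 'I_r -> R)
     (fun j (c : 'I_r -> R) => j \in Tk -> w2 j = \sum_(l in Sk r k) c l *: g l)).
  move=> j; case: (boolP (j \in Tk)) => hj.
    by have [c' hc'] := hin2 j hj; exists c'.
  by exists (fun _ => 0).
set s2 := [seq i <- index_enum 'I_n | (i \in Tk) && (i != kn)].
have hkns2 : kn \notin s2 by rewrite mem_filter eqxx andbF.
have hus2 : uniq s2 by apply: filter_uniq; exact: index_enum_uniq.
have hR4 := @clear_seq _ _ _ w3 kn (fun y => - Dc y lk) s2 hkns2 hus2.
set w4 := (fun y => if y \in s2 then _ else _) in hR4.
exists w4; split; first exact: Reach_trans hR1 (Reach_trans hR2 (Reach_trans hR3 hR4)).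
have hs2 : forall j, (j \in s2) = (k < j)%N.
  move=> j; rewrite mem_filter mem_index_enum andbT inE -val_eqE /=; lia.
split; first exact: gen_Reach hgen2 (Reach_trans hR3 hR4).
split.
  move=> j hj; rewrite /w4 hs2.
  have -> : (k < j)%N = false by lia.
  case: (eqVneq j kn) => [->|hjk].
    rewrite w3kn /cform /= (insubT (fun l => (l < r)%N) hk) //.
  rewrite w3j // hout2; last by rewrite inE; apply: contra hjk => h;
    rewrite -val_eqE /=; lia.
  rewrite hout1; last by rewrite inE; apply: contra hjk => h;
    rewrite -val_eqE /=; lia.
  apply: hpre; move: hjk; rewrite -val_eqE /=; lia.
move=> j hj; rewrite /w4 hs2.
have -> : (k < j)%N = true by lia.
have hjk : j != kn by rewrite -val_eqE /=; lia.
have hjT : j \in Tk by rewrite inE; lia.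
rewrite w3j // w3kn hDc // (bigD1 lk) /=; last by rewrite inE.
exists (Dc j).
rewrite scaleNr (addrC (Dc j lk *: g lk)) addrK.
apply: eq_bigl => l; rewrite !inE -val_eqE /=; lia.
Qed.


Lemma all_inv {R : comPzRingType} {M : lmodType R} {n r : nat}
  (hQE : quasi_euclidean R) (g : 'I_r -> M) (hg : generates g) (hr : (r < n)%N)
  (k : nat) : (k <= r)%N -> forall v : 'I_n -> M, generates v ->
  exists w, Reach v w /\ Inv g k w.
Proof.
elim: k => [_ v hv|k IH hk v hv].
  exists v; split; first exact: Reach_refl.
  split=> //; split=> // j _.
  have [c ->] := hg (v j); exists c.
  by apply: eq_bigl => l; rewrite inE.
have [w [hw hi]] := IH (ltnW hk) v hv.
have [w' [hw' hi']] := step hQE hr hk hi.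
exists w'; split => //; exact: Reach_trans hw hw'.
Qed.

Lemma to_cform {R : comPzRingType} {M : lmodType R} {n r : nat}
  (hQE : quasi_euclidean R) (g : 'I_r -> M) (hg : generates g) (hr : (r < n)%N)
  (v : 'I_n -> M) : generates v -> Reach v (cform g).
Proof.
move=> hv; have [w [hw [_ [hpre hsp]]]] := all_inv hQE hg hr (leqnn r) hv.
have -> : cform g = w; last exact: hw.
apply: functional_extensionality => j; case: (ltnP j r) => hj.
  by rewrite hpre.
have [c ->] := hsp j hj.
rewrite /cform insubF /=; last by rewrite ltnNge hj.
by rewrite big1 // => l; rewrite inE leqNgt ltn_ord.
Qed.

Theorem corollaryB (R : comPzRingType) (M : lmodType R) (r : nat)
  (hNoeth : noetherian R) (hQE : quasi_euclidean R) (hrk : is_rk M r)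
  (n : nat) (hn : (r < n)%N) :
  forall u v : 'I_n -> M, Um u -> Um v ->
    exists E : 'M[R]_n, En E /\ mact v E = u.
Proof.
move=> u v hu hv.
have [[g hg] _] := hrk.
have hvc := to_cform hQE hg hn hv.
have huc := to_cform hQE hg hn hu.
exact: Reach_mact (Reach_trans hvc (Reach_sym huc)).
Qed.
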